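(* Consider the control-affine system $\dot x = f(x) + g(x)u$ with $f:\mathbb{R}^{n_x}\to\mathbb{R}^{n_x}$, $g:\mathbb{R}^{n_x}\to\mathbb{R}^{n_x\times n_u}$ Lipschitz and $\mathcal{C}^{m-1}$, control set $\mathcal{U}\subset\mathbb{R}^{n_u}$ compact, and a $\mathcal{C}^m$ function $h:\mathbb{R}^{n_x}\to\mathbb{R}$ of relative degree $m$. Let $\Gamma_1,\dots,\Gamma_m$ be class $\mathcal{K}$ functions with $\Gamma_i \in \mathcal{C}^{m-i}$, and define $\psi_0 = h$, $\psi_i = \dot\psi_{i-1} + \Gamma_i(\psi_{i-1})$ for $i = 1,\dots,m-1$. Let $a(x) = (L_g L_f^{m-1} h(x))^\top$ and $b(x) = -L_f^m h(x) - \sum_{i=0}^{m-1} L_f^i(\Gamma_{m-i}\circ\psi_{m-i-1})(x)$, let $u_n$ be a nominal controller, and let $\pi(x)$ be a minimizer of $\|u - u_n(x)\|_2^2$ over $u \in \mathcal{U}$ subject to $a(x)^\top u \ge b(x)$. Assume this problem is feasible and $\pi(x) \notin \partial\mathcal{U}$. If the system controlled by $\pi$ is at an equilibrium $(x_e,u_e)$, i.e. $u_e = \pi(x_e)$ and $0 = f(x_e) + g(x_e)u_e$, then either (i) $u_n(x_e) = u_e$, or (ii) $h(x_e) = 0$.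
   Context: $h$ has relative degree $m$ means $L_g L_f^{i} h \equiv 0$ for $i = 0,\dots,m-2$ (so that the $m$-th time derivative of $h$ along the system is the first to depend on $u$, namely $\dot\psi_{m-1} + \Gamma_m(\psi_{m-1}) = L_f^m h + L_g L_f^{m-1}h\, u + \sum_{i=0}^{m-1} L_f^i(\Gamma_{m-i}\circ\psi_{m-i-1})$). Derivatives $\dot\psi_i$ are along the system trajectories. A class $\mathcal{K}$ function is continuous, strictly increasing, with value $0$ at $0$. $\partial\mathcal{U}$ denotes the boundary of $\mathcal{U}$. *)

(* Defs.v *)
From HB Require Import structures.
From mathcomp Require Import all_boot all_order all_algebra.
From mathcomp Require Import all_classical all_reals all_analysis.
Set Implicit Arguments. Unset Strict Implicit. Unset Printing Implicit Defensive.
Import Order.TTheory GRing.Theory Num.Theory.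
Import numFieldNormedType.Exports.
Local Open Scope classical_set_scope.
Local Open Scope ring_scope.

Section Defs.
Variable R : realType.

(* C^k in the Frechet sense: C^0 = continuous; C^{k+1} = differentiable
   everywhere and every directional derivative x |-> dF(x) v is C^k
   (equivalent, in finite dimension, to dF being C^k). *)
Fixpoint Ck (V W : normedModType R) (k : nat) (F : V -> W) : Prop :=
  match k with
  | 0 => continuous F
  | k.+1 => (forall x, differentiable F x) /\
            forall v : V, Ck k (fun x => 'd F x v)
  end.

(* class K function on the whole real line (extended class K) *)
Definition classK (G : R -> R) : Prop :=
  continuous G /\ {mono G : x y / x < y} /\ G 0 = 0.

Definition bdry (T : topologicalType) (A : set T) : set T :=
  closure A `\` A°.

Variables nx nu : nat.
Local Notation X := 'cV[R]_nx.
Local Notation U := 'cV[R]_nu.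

Definition Lie (f : X -> X) (h : X -> R) : X -> R := fun x => 'd h x (f x).

Definition iterLie (f : X -> X) (k : nat) (h : X -> R) : X -> R :=
  iter k (Lie f) h.

Definition LieG (g : X -> 'M[R]_(nx, nu)) (h : X -> R) : X -> 'rV[R]_nu :=
  fun x => \row_j 'd h x (col j (g x)).

(* psi_0 = h, psi_i = \dot psi_{i-1} + Gam_i (psi_{i-1});  by relative degree
   \dot psi_{i-1} = L_f psi_{i-1} for i <= m-1 *)
Fixpoint psi (f : X -> X) (Gam : nat -> R -> R) (h : X -> R) (i : nat) : X -> R :=
  match i with
  | 0 => h
  | i.+1 => fun x => Lie f (psi f Gam h i) x + Gam i.+1 (psi f Gam h i x)
  end.

Definition acoef (f : X -> X) (g : X -> 'M[R]_(nx, nu)) (h : X -> R) (m : nat)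
  (x : X) : U := (LieG g (iterLie f m.-1 h) x)^T.

Definition bcoef (f : X -> X) (Gam : nat -> R -> R) (h : X -> R) (m : nat)
  (x : X) : R :=
  - iterLie f m h x
  - \sum_(i < m) iterLie f i (fun y => Gam (m - i)%N (psi f Gam h (m - i - 1)%N y)) x.

Definition dotc (a u : U) : R := \sum_(j < nu) a j ord0 * u j ord0.

Definition sqnorm2 (u : U) : R := \sum_(j < nu) (u j ord0) ^+ 2.

End Defs.

(* Main.v *)
Require Import Defs.
From HB Require Import structures.
From mathcomp Require Import all_boot all_order all_algebra.
From mathcomp Require Import all_classical all_reals all_analysis.
From mathcomp Require Import zify ring lra.
Import Order.TTheory GRing.Theory Num.Theory.
Import numFieldNormedType.Exports.
Local Open Scope classical_set_scope.
Local Open Scope ring_scope.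
Set Implicit Arguments. Unset Strict Implicit.
Lemma Ck_S (R : realType) (V W : normedModType R) (k : nat) (F : V -> W) :
  Ck k.+1 F -> Ck k F.
Proof.
elim: k F => [|k IH] F /=.
  by case=> dF _ x; apply: differentiable_continuous.
by case=> dF H; split => // v; apply: IH; apply: H.
Qed.

Lemma Ck_le (R : realType) (V W : normedModType R) (k1 k2 : nat) (F : V -> W) :
  (k1 <= k2)%N -> Ck k2 F -> Ck k1 F.
Proof.
move=> /subnK <-; elim: (k2 - k1)%N => [|d IH] //= H.
by apply: IH; apply: Ck_S.
Qed.

Lemma Ck_cst (R : realType) (V W : normedModType R) (k : nat) (c : W) :
  Ck k (fun _ : V => c).
Proof.
elim: k c => [|k IH] c /=; first exact: cst_continuous.
split=> [x|v]; first exact: differentiable_cst.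
have -> : (fun x => 'd (fun _ : V => c) x v) = (fun _ => 0).
  by apply/funext => x; rewrite (diff_cst c x).
exact: IH.
Qed.

Lemma Ck_D (R : realType) (V W : normedModType R) (k : nat) (F G : V -> W) :
  Ck k F -> Ck k G -> Ck k (fun x => F x + G x).
Proof.
elim: k F G => [|k IH] F G /=.
  by move=> cF cG x; apply: (continuousD (cF x) (cG x)).
case=> dF HF [dG HG]; split=> [x|v].
  exact: (differentiableD (dF x) (dG x)).
have -> : (fun x => 'd (fun y => F y + G y) x v) = (fun x => 'd F x v + 'd G x v).
  by apply/funext => x; rewrite (diffD (dF x) (dG x)).
exact: IH.
Qed.

Lemma Ck_M (R : realType) (V : normedModType R) (k : nat) (F G : V -> R) :
  Ck k F -> Ck k G -> Ck k (fun x => F x * G x).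
Proof.
elim: k F G => [|k IH] F G /=.
  by move=> cF cG x; apply: (continuousM (cF x) (cG x)).
move=> cF cG; have [dF HF] := cF; have [dG HG] := cG; split=> [x|v].
  exact: (differentiableM (dF x) (dG x)).
have -> : (fun x => 'd (fun y => F y * G y) x v) =
   (fun x => F x * 'd G x v + G x * 'd F x v).
  by apply/funext => x; rewrite (diffM (dF x) (dG x)).
apply: Ck_D; apply: IH => //; exact: Ck_S.
Qed.

Lemma Ck_sum (R : realType) (V W : normedModType R) (k : nat) (I : Type)
  (r : seq I) (G : I -> V -> W) :
  (forall i, Ck k (G i)) -> Ck k (fun x => \sum_(i <- r) G i x).
Proof.
move=> HG; elim: r => [|a r IH].
  have -> : (fun x => \sum_(i <- [::]) G i x) = (fun _ => 0).
    by apply/funext => x; rewrite big_nil.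
  exact: Ck_cst.
have -> : (fun x => \sum_(i <- a :: r) G i x) = (fun x => G a x + \sum_(i <- r) G i x).
  by apply/funext => x; rewrite big_cons.
exact: Ck_D.
Qed.
Lemma dC (R : realType) (V : normedModType R) (G : R -> R) (F : V -> R) x v :
  differentiable F x -> differentiable G (F x) ->
  'd (fun y => G (F y)) x v = 'd F x v * 'd G (F x) 1.
Proof.
move=> dF dG.
have -> : (fun y => G (F y)) = G \o F by [].
rewrite (diff_comp dF dG) /=.
by rewrite -[in LHS](mulr1 ('d F x v)) -[_ * 1]/(('d F x v) *: (1:R)) linearZ.
Qed.

Lemma Ck_comp (R : realType) (V : normedModType R) (k : nat) (G : R -> R) (F : V -> R) :
  Ck k G -> Ck k F -> Ck k (fun x => G (F x)).
Proof.
elim: k G F => [|k IH] G F /=.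
  by move=> cG cF x; apply: (continuous_comp (cF x) (cG (F x))).
move=> cG cF; have [dG HG] := cG; have [dF HF] := cF; split=> [x|v].
  exact: (differentiable_comp (dF x) (dG (F x))).
have -> : (fun x => 'd (fun y => G (F y)) x v) =
   (fun x => 'd F x v * (fun y => 'd G y 1) (F x)).
  by apply/funext => x; rewrite dC.
apply: (@Ck_M _ _ _ (fun x => 'd F x v) (fun x => 'd G (F x) 1)); first exact: HF.
apply: (IH (fun y => 'd G y 1)); [exact: HG | exact: Ck_S].
Qed.

Lemma diff_coord (R : realType) m n (M : 'M[R]_(m, n)) i j (N : 'M[R]_(m, n)) :
  'd (fun N : 'M[R]_(m, n) => N i j : R ) M N = N i j.
Proof.
have @f : {linear 'M[R]_(m, n) -> R}.
  by exists (fun N : 'M[R]_(_, _) => N i j); do 2![eexists]; do ?[constructor];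
     rewrite ?mxE// => ? *; rewrite ?mxE//; move=> ?; rewrite !mxE.
rewrite (_ : (fun _ => _) = f) //.
by rewrite diff_lin //; apply: coord_continuous.
Qed.

Lemma Ck_coord (R : realType) (V : normedModType R) (k : nat) m n
  (F : V -> 'M[R]_(m, n)) i j :
  Ck k F -> Ck k (fun x => F x i j).
Proof.
elim: k F => [|k IH] F /=.
  move=> cF x.
  exact: (continuous_comp (cF x) (@coord_continuous R m n i j (F x))).
case=> dF HF; split=> [x|v].
  exact: (differentiable_comp (dF x) (differentiable_coord _ i j)).
have -> : (fun x => 'd (fun y => F y i j) x v) = (fun x => 'd F x v i j).
  apply/funext => x.
  have -> : (fun y => F y i j) = (fun N : 'M[R]_(m, n) => N i j) \o F by [].
  by rewrite (diff_comp (dF x) (differentiable_coord _ i j)) /= diff_coord.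
exact: IH.
Qed.

Lemma Lie_sum (R : realType) nx (f : 'cV[R]_nx -> 'cV[R]_nx) (phi : 'cV[R]_nx -> R) x :
  Lie f phi x = \sum_(i < nx) f x i ord0 * 'd phi x (delta_mx i ord0).
Proof.
rewrite /Lie {1}(matrix_sum_delta (f x)) linear_sum.
apply: eq_bigr => i _; rewrite big_ord1 linearZ /=.
by [].
Qed.

Lemma Ck_Lie (R : realType) nx (k : nat) (f : 'cV[R]_nx -> 'cV[R]_nx)
  (phi : 'cV[R]_nx -> R) :
  Ck k f -> Ck k.+1 phi -> Ck k (Lie f phi).
Proof.
move=> cf [dphi Hphi].
have -> : Lie f phi = (fun x => \sum_(i < nx) f x i ord0 * 'd phi x (delta_mx i ord0)).
  by apply/funext => x; rewrite Lie_sum.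
apply: Ck_sum => i; apply: Ck_M; last exact: Hphi.
exact: Ck_coord.
Qed.
Lemma dD (R : realType) (V : normedModType R) (F G : V -> R) x v :
  differentiable F x -> differentiable G x ->
  'd (fun y => F y + G y) x v = 'd F x v + 'd G x v.
Proof. by move=> dF dG; rewrite (diffD dF dG). Qed.

Lemma dM (R : realType) (V : normedModType R) (F G : V -> R) x v :
  differentiable F x -> differentiable G x ->
  'd (fun y => F y * G y) x v = F x * 'd G x v + G x * 'd F x v.
Proof. by move=> dF dG; rewrite (diffM dF dG). Qed.

Lemma LieG0P (R : realType) nx nu (g : 'cV[R]_nx -> 'M[R]_(nx, nu)) phi x :
  LieG g phi x = 0 <-> forall j, 'd phi x (col j (g x)) = 0.
Proof.
split.
  by move=> H j; have := congr1 (fun M : 'rV[R]_nu => M ord0 j) H; rewrite /LieG !mxE.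
by move=> H; apply/rowP => j; rewrite /LieG !mxE H.
Qed.
Arguments LieG0P {R nx nu g phi x}.

Fixpoint PP {R : realType} {nx nu : nat} (f : 'cV[R]_nx -> 'cV[R]_nx)
  (g : 'cV[R]_nx -> 'M[R]_(nx, nu)) (r : nat) (phi : 'cV[R]_nx -> R) : Prop :=
  match r with
  | 0 => Ck 1 phi /\ (forall x, LieG g phi x = 0)
  | r.+1 => Ck r.+2 phi /\ (forall x, LieG g phi x = 0) /\ PP f g r (Lie f phi)
  end.

Lemma PP_Ck R nx nu f g r phi : @PP R nx nu f g r phi -> Ck r.+1 phi.
Proof. by case: r => [[]|r []]. Qed.

Lemma PP_L R nx nu f g r phi : @PP R nx nu f g r phi -> forall x, LieG g phi x = 0.
Proof. by case: r => [[]|r [? []]]. Qed.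

Lemma PP_diff R nx nu f g r phi : @PP R nx nu f g r phi -> forall x, differentiable phi x.
Proof. by move=> /PP_Ck []. Qed.

Lemma PP_S R nx nu f g r phi : @PP R nx nu f g r.+1 phi -> PP f g r phi.
Proof.
elim: r phi => [|r IH] phi.
  by case=> c [L _]; split=> //; apply: Ck_S.
case=> c [L P]; split; first exact: Ck_S.
by split=> //; apply: IH.
Qed.

Lemma Lie_D (R : realType) nx (f : 'cV[R]_nx -> 'cV[R]_nx) (F G : 'cV[R]_nx -> R) :
  (forall x, differentiable F x) -> (forall x, differentiable G x) ->
  Lie f (fun x => F x + G x) = (fun x => Lie f F x + Lie f G x).
Proof. by move=> dF dG; apply/funext => x; rewrite /Lie dD. Qed.

Lemma Lie_M (R : realType) nx (f : 'cV[R]_nx -> 'cV[R]_nx) (F G : 'cV[R]_nx -> R) :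
  (forall x, differentiable F x) -> (forall x, differentiable G x) ->
  Lie f (fun x => F x * G x) = (fun x => F x * Lie f G x + G x * Lie f F x).
Proof. by move=> dF dG; apply/funext => x; rewrite /Lie dM. Qed.

Lemma PP_D R nx nu f g r F G : @PP R nx nu f g r F -> PP f g r G ->
  PP f g r (fun x => F x + G x).
Proof.
elim: r F G => [|r IH] F G.
  move=> [cF LF] [cG LG]; split; first exact: Ck_D.
  move=> x; apply/LieG0P => j; rewrite dD; [|exact: (proj1 cF x)|exact: (proj1 cG x)].
  by rewrite (proj1 LieG0P (LF x) j) (proj1 LieG0P (LG x) j) addr0.
move=> PF PG; have [cF [LF PF']] := PF; have [cG [LG PG']] := PG.
split; first exact: Ck_D.
split.
  move=> x; apply/LieG0P => j; rewrite dD; try by [apply: (PP_diff PF)|apply: (PP_diff PG)].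
  by rewrite (proj1 LieG0P (LF x) j) (proj1 LieG0P (LG x) j) addr0.
rewrite Lie_D; try by [apply: (PP_diff PF)|apply: (PP_diff PG)].
exact: IH.
Qed.
Lemma Lie_C (R : realType) nx (f : 'cV[R]_nx -> 'cV[R]_nx) (G : R -> R) (F : 'cV[R]_nx -> R) :
  (forall x, differentiable F x) -> (forall y, differentiable G y) ->
  Lie f (fun x => G (F x)) = (fun x => Lie f F x * 'd G (F x) 1).
Proof. by move=> dF dG; apply/funext => x; rewrite /Lie dC. Qed.

Lemma PP_M R nx nu f g r F G : @PP R nx nu f g r F -> PP f g r G ->
  PP f g r (fun x => F x * G x).
Proof.
elim: r F G => [|r IH] F G.
  move=> [cF LF] [cG LG]; split; first exact: Ck_M.
  move=> x; apply/LieG0P => j; rewrite dM; [|exact: (proj1 cF x)|exact: (proj1 cG x)].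
  by rewrite (proj1 LieG0P (LF x) j) (proj1 LieG0P (LG x) j) !mulr0 addr0.
move=> PF PG; have [cF [LF PF']] := PF; have [cG [LG PG']] := PG.
split; first exact: Ck_M.
split.
  move=> x; apply/LieG0P => j; rewrite dM; try by [apply: (PP_diff PF)|apply: (PP_diff PG)].
  by rewrite (proj1 LieG0P (LF x) j) (proj1 LieG0P (LG x) j) !mulr0 addr0.
rewrite Lie_M; try by [apply: (PP_diff PF)|apply: (PP_diff PG)].
by apply: PP_D; apply: IH => //; apply: PP_S.
Qed.

Lemma PP_C (R : realType) nx nu f g r (G : R -> R) F : Ck r.+1 G -> @PP R nx nu f g r F ->
  PP f g r (fun x => G (F x)).
Proof.
elim: r G F => [|r IH] G F.
  move=> cG [cF LF]; split; first exact: Ck_comp.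
  move=> x; apply/LieG0P => j; rewrite dC; [|exact: (proj1 cF x)|exact: (proj1 cG)].
  by rewrite (proj1 LieG0P (LF x) j) mul0r.
move=> cG PF; have [cF [LF PF']] := PF.
split; first exact: Ck_comp.
split.
  move=> x; apply/LieG0P => j; rewrite dC; [|exact: (PP_diff PF)|exact: (proj1 cG)].
  by rewrite (proj1 LieG0P (LF x) j) mul0r.
rewrite Lie_C; [|exact: (PP_diff PF)|exact: (proj1 cG)].
apply: PP_M => //.
apply: (IH (fun y => 'd G y 1)); first exact: (proj2 cG).
exact: PP_S.
Qed.

Lemma PP_iter R nx nu f g r j phi : @PP R nx nu f g (r + j) phi ->
  PP f g r (iterLie f j phi).
Proof.
elim: j phi => [|j IH] phi; first by rewrite addn0.
rewrite addnS => -[_ [_ P]].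
by rewrite /iterLie iterSr; apply: IH.
Qed.

Lemma PP_build R nx nu f g r phi : Ck r f -> Ck r.+1 phi ->
  (forall j, (j <= r)%N -> forall x, LieG g (iterLie f j phi) x = 0) ->
  @PP R nx nu f g r phi.
Proof.
elim: r phi => [|r IH] phi cf cphi HL.
  by split=> //; apply: (HL 0%N).
split=> //; split; first exact: (HL 0%N).
apply: IH; first exact: Ck_S.
  exact: Ck_Lie.
move=> j hj x; have := HL j.+1 hj x.
by rewrite /iterLie iterSr.
Qed.
Lemma mulmx_cols (R : realType) nx nu (G : 'M[R]_(nx, nu)) (u : 'cV[R]_nu) :
  G *m u = \sum_(j < nu) u j ord0 *: col j G.
Proof.
apply/matrixP => i k; rewrite !mxE summxE; apply: eq_bigr => j _.
by rewrite !mxE (ord1 k) mulrC.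
Qed.

Lemma Lf_eq (R : realType) nx nu (f : 'cV[R]_nx -> 'cV[R]_nx)
  (g : 'cV[R]_nx -> 'M[R]_(nx, nu)) xe ue (phi : 'cV[R]_nx -> R) :
  f xe + g xe *m ue = 0 ->
  Lie f phi xe = - dotc ((LieG g phi xe)^T) ue.
Proof.
move=> H.
have fe : f xe = - (g xe *m ue) by apply/eqP; rewrite -addr_eq0; apply/eqP.
rewrite /Lie fe linearN mulmx_cols linear_sum /dotc; congr (- _).
apply: eq_bigr => j _; rewrite linearZ /= !mxE mulrC.
by [].
Qed.

Lemma dotc0 (R : realType) nu (u : 'cV[R]_nu) : dotc 0 u = 0.
Proof. by rewrite /dotc big1 // => j _; rewrite mxE mul0r. Qed.

Lemma classK_inj (R : realType) (G : R -> R) a : classK G -> G a = 0 -> a = 0.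
Proof.
move=> [_ [mono G0]] Ga.
case: (ltgtP a 0) => // H.
  by move: H; rewrite -mono G0 Ga ltxx.
by move: H; rewrite -mono G0 Ga ltxx.
Qed.

Lemma dotcT0 (R : realType) nu (u : 'cV[R]_nu) : dotc (0 : 'rV[R]_nu)^T u = 0.
Proof. by rewrite /dotc big1 // => j _; rewrite !mxE mul0r. Qed.
Lemma dotcD (R : realType) nu (a u v : 'cV[R]_nu) (t : R) :
  dotc a (u + t *: v) = dotc a u + t * dotc a v.
Proof.
rewrite /dotc mulr_sumr -big_split; apply: eq_bigr => j _; rewrite !mxE /=; ring.
Qed.

Lemma sqnormZ (R : realType) nu (v : 'cV[R]_nu) (t : R) :
  sqnorm2 (t *: v) = t ^+ 2 * sqnorm2 v.
Proof.
rewrite /sqnorm2 mulr_sumr; apply: eq_bigr => j _; rewrite !mxE /=; ring.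
Qed.

Lemma sqnorm_ge0 (R : realType) nu (v : 'cV[R]_nu) : 0 <= sqnorm2 v.
Proof. by apply: sumr_ge0 => j _; apply: sqr_ge0. Qed.

Lemma sqnorm_eq0 (R : realType) nu (v : 'cV[R]_nu) : sqnorm2 v = 0 -> v = 0.
Proof.
move=> H; have := psumr_eq0P (fun j _ => sqr_ge0 (v j ord0)) H => H2.
apply/matrixP => i j; rewrite (ord1 j) mxE.
by apply/eqP; rewrite -sqrf_eq0; apply/eqP; apply: H2.
Qed.

Lemma qp (R : realType) nu (U : set 'cV[R]_nu) (a : 'cV[R]_nu) (b : R) (ue w : 'cV[R]_nu) :
  U° ue -> b < dotc a ue ->
  (forall u, U u -> b <= dotc a u -> sqnorm2 (ue - w) <= sqnorm2 (u - w)) -> w = ue.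
Proof.
move=> /nbhs_ballP [e e0 he] hb hmin.
set d := w - ue; set c := dotc a d; set D := dotc a ue - b.
have D0 : 0 < D by rewrite /D subr_gt0.
have nd : 0 < `|d| + 1 by rewrite ltr_wpDl.
have nc : 0 < `|c| + 1 by rewrite ltr_wpDl.
set t := Num.min (1/2) (Num.min (e / (`|d| + 1) / 2) (D / (`|c| + 1))).
have t0 : 0 < t.
  rewrite /t !lt_min; apply/and3P; split => //; apply: divr_gt0 => //; exact: divr_gt0.
have t1 : t <= 1/2 by rewrite /t ge_min lexx.
have t2 : t <= e / (`|d| + 1) / 2 by rewrite /t !ge_min lexx orbT.
have t3 : t <= D / (`|c| + 1) by rewrite /t !ge_min lexx !orbT.
have t2' : t * (`|d| + 1) <= e / 2.
  have := ler_wpM2r (ltW nd) t2.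
  by rewrite (_ : e / (`|d| + 1) / 2 * (`|d| + 1) = e / 2) //; field; rewrite gt_eqF.
have t3' : t * (`|c| + 1) <= D.
  have := ler_wpM2r (ltW nc) t3.
  by rewrite (_ : D / (`|c| + 1) * (`|c| + 1) = D) //; field; rewrite gt_eqF.
have hU : U (ue + t *: d).
  apply: he; rewrite -ball_normE /ball_ /=.
  rewrite opprD addrA subrr add0r normrN normrZ gtr0_norm //.
  have : 0 <= `|d| := normr_ge0 d.
  have : 0 < e := e0.
  move=> ? ?; nra.
have hc : - `|c| <= c by have := ler_norm (- c); rewrite normrN lerNl.
have hB : b <= dotc a (ue + t *: d).
  rewrite dotcD.
  have H : 0 <= t * (c + `|c|) by apply: mulr_ge0; [exact: ltW | rewrite -lerBlDr sub0r].
  have eD : D = dotc a ue - b by [].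
  rewrite mulrDr in t3'; rewrite mulrDr in H.
  rewrite -/c; rewrite mulr1 in t3'; clearbody t c D; lra.
have := hmin _ hU hB.
have -> : ue + t *: d - w = (1 - t) *: (ue - w).
  by rewrite /d scalerBl scale1r !scalerBr; apply/matrixP => i j; rewrite !mxE; ring.
rewrite sqnormZ => H.
have S0 := sqnorm_ge0 (ue - w).
have tt : 0 < t * (2 - t) by apply: mulr_gt0 => //; lra.
have : sqnorm2 (ue - w) * (t * (2 - t)) <= 0.
  move: H S0; clearbody t; move: (sqnorm2 (ue - w)) => S H S0.
  have E : (1 - t) ^+ 2 * S = S - S * (t * (2 - t)) by ring.
  lra.
rewrite pmulr_lle0 // => S1.
have : sqnorm2 (ue - w) = 0 by apply/le_anti; rewrite S1 S0.
by move/sqnorm_eq0/eqP; rewrite subr_eq0 => /eqP.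
Qed.
Unset Implicit Arguments.

Theorem proposition2 (R : realType) (nx nu m : nat)
  (f : 'cV[R]_nx -> 'cV[R]_nx) (g : 'cV[R]_nx -> 'M[R]_(nx, nu))
  (h : 'cV[R]_nx -> R) (Uset : set 'cV[R]_nu)
  (Gam : nat -> R -> R) (un pi : 'cV[R]_nx -> 'cV[R]_nu)
  (xe : 'cV[R]_nx) (ue : 'cV[R]_nu) :
  (0 < m)%N ->
  lipschitz f -> lipschitz g ->
  Ck m.-1 f -> Ck m.-1 g ->
  compact Uset ->
  Ck m h ->
  (* relative degree m *)
  (forall i : nat, (i.+2 <= m)%N -> forall x, LieG g (iterLie f i h) x = 0) ->
  (forall i : nat, (1 <= i <= m)%N -> classK (Gam i) /\ Ck (m - i) (Gam i)) ->
  (* feasibility of the QP *)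
  (forall x, exists u, Uset u /\ dotc (acoef f g h m x) u >= bcoef f Gam h m x) ->
  (* pi(x) is a minimizer of the QP *)
  (forall x, Uset (pi x) /\ dotc (acoef f g h m x) (pi x) >= bcoef f Gam h m x /\
     forall u, Uset u -> dotc (acoef f g h m x) u >= bcoef f Gam h m x ->
       sqnorm2 (pi x - un x) <= sqnorm2 (u - un x)) ->
  (forall x, ~ bdry Uset (pi x)) ->
  (* equilibrium of the closed loop *)
  ue = pi xe -> f xe + g xe *m ue = 0 ->
  un xe = ue \/ h xe = 0.
Proof.
move=> m0 _ _ cf _ _ ch reldeg hGam _ hpi hbd Hue Heq.
have [F2 F1] : (forall k, (k.+2 <= m)%N -> forall x, LieG g (psi f Gam h k) x = 0) /\
  (forall i, (i.+1 < m)%N -> forall x, LieG g (iterLie f i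
      (fun y => Gam (m - i.+1)%N (psi f Gam h (m - i.+1 - 1)%N y))) x = 0).
  case: m m0 cf ch reldeg hGam hpi => [//|[|r]] _ cf ch reldeg hGam _.
    by split=> [k hk|i hi]; exfalso; lia.
  have Ph : PP f g r h.
    apply: PP_build; [exact: Ck_S | exact: Ck_S |].
    by move=> j hj; apply: reldeg; rewrite !ltnS.
  have Ppsi : forall k, (k <= r)%N -> PP f g (r - k) (psi f Gam h k).
    elim=> [|k IH] hk; first by rewrite subn0.
    have P := IH (ltnW hk).
    have e : (r - k = (r - k.+1).+1)%N by lia.
    rewrite e in P; rewrite /=.
    apply: PP_D; first exact: (proj2 (proj2 P)).
    apply: PP_C; last exact: PP_S.
    have [_ cG] := hGam k.+1 ltac:(lia).
    by apply: (Ck_le _ cG); lia.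
  split.
    by move=> k hk x; apply: (PP_L (Ppsi k ltac:(lia))).
  move=> i hi x.
  have e1 : (r.+2 - i.+1 - 1 = r - i)%N by lia.
  rewrite e1.
  apply: (@PP_L _ _ _ _ _ 0%N); apply: PP_iter; rewrite add0n.
  have P := Ppsi (r - i)%N (leq_subr _ _).
  have e2 : (r - (r - i) = i)%N by lia.
  rewrite e2 in P.
  apply: PP_C => //.
  have [_ cG] := hGam (r.+2 - i.+1)%N ltac:(lia).
  by apply: (Ck_le _ cG); lia.
case: m m0 cf ch reldeg hGam hpi F1 F2 => [//|m] _ cf ch reldeg hGam hpi F1 F2.
have [hU [hcon hmin]] := hpi xe; rewrite -Hue in hU hcon hmin.
have HD : dotc (acoef f g h m.+1 xe) ue - bcoef f Gam h m.+1 xe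
          = Gam m.+1 (psi f Gam h m xe).
  rewrite /acoef /bcoef /= -[LHS]/(dotc (LieG g (iterLie f m h) xe)^T ue
     - (- Lie f (iterLie f m h) xe - _)).
  rewrite (Lf_eq _ Heq) big_ord_recl /= subn0 subn1 /=.
  rewrite big1 ?addr0; first by rewrite opprB opprK addrC subrK.
  move=> i _; rewrite /bump leq0n add0n add1n.
  by rewrite (Lf_eq _ Heq) F1 ?dotcT0 ?oppr0 // ltnS.
have [Dpos|Dle] := ltrP 0 (dotc (acoef f g h m.+1 xe) ue - bcoef f Gam h m.+1 xe).
  left; apply: (qp (U := Uset) (a := acoef f g h m.+1 xe) (b := bcoef f Gam h m.+1 xe)).
  - case: (pselect (Uset° ue)) => // H; exfalso; apply: (hbd xe); rewrite -Hue.
    by split => //; apply: subset_closure.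
  - by rewrite -subr_gt0.
  - by move=> u Uu Bu; apply: hmin.
right.
have D0 : Gam m.+1 (psi f Gam h m xe) = 0.
  by rewrite -HD; apply/le_anti; rewrite Dle subr_ge0 hcon.
have Hm : psi f Gam h m xe = 0.
  by apply: (classK_inj (proj1 (hGam m.+1 _))) => //; rewrite leqnn.
have Hd : forall d, (d <= m)%N -> psi f Gam h (m - d) xe = 0.
  elim=> [|d IH] hd; first by rewrite subn0.
  have := IH (ltnW hd).
  have -> : (m - d = (m - d.+1).+1)%N by lia.
  rewrite /= (Lf_eq _ Heq) F2; last by lia.
  rewrite dotcT0 oppr0 add0r => H.
  apply: (classK_inj (proj1 (hGam (m - d.+1).+1 _))) => //; lia.
by have := Hd m (leqnn m); rewrite subnn.
Qed.
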